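(* Let $n \ge k \ge 1$ and let $n_1 \le n_2 \le \cdots \le n_k$ be positive integers summing to $n$. Let $G = G(n_1,\ldots,n_k)$ and, for each $i$, let $P_i$ be the directed path $v_{i,1} \to v_{i,2} \to \cdots \to v_{i,n_i}$. Then the digraph $D(G,P_1,\ldots,P_k)$ is acyclic.
   Context: The graph $G(n_1,\ldots,n_k)$: for each $1 \le i \le k$ it contains a path on vertices $v_{i,1},\ldots,v_{i,n_i}$ (edges $v_{i,a}v_{i,a+1}$ for $1 \le a < n_i$), all vertices distinct, and additionally, for each $1 \le i < j \le k$: (i) if $n_i > 1$, the edge $v_{i,a}v_{j,a}$ for each $1 \le a < n_i$; (ii) if $n_j > 1$, the edge $v_{i,a+1}v_{j,a}$ for each $1 \le a < n_i$; (iii) the edge $v_{i,n_i}v_{j,a}$ for each $n_i \le a \le n_j$. For a graph $G$ with vertex-disjoint directed paths $P_1,\ldots,P_k$ covering $V(G)$, the digraph $D(G,P_1,\ldots,P_k)$ has vertex set $V(G)$, and for distinct $x,y$ there is an arc $x \to y$ iff either some $P_j$ contains the arc $x \to y$, or there is a vertex $z$ and a path $P_j$ with $x \to z$ an arc of $P_j$ and $y$ adjacent to $z$ in $G$. Acyclic means no directed cycle. *)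

(* Defs.v *)
From Stdlib Require List.
From mathcomp Require Import all_boot.
Set Implicit Arguments. Unset Strict Implicit. Unset Printing Implicit Defensive.

(* Vertices of G(n_1,...,n_k) are pairs (i,a) : nat * nat standing for v_{i,a},
   1 <= i <= k, 1 <= a <= n_i.  The sequence ns = [:: n_1; ...; n_k]. *)
Definition nn (ns : seq nat) (i : nat) : nat := nth 0 ns i.-1.

Definition Gvtx (ns : seq nat) (x : nat * nat) : bool :=
  (1 <= x.1 <= size ns) && (1 <= x.2 <= nn ns x.1).

(* One orientation of the edges of G(n_1,...,n_k). *)
Definition Gedge (ns : seq nat) (x y : nat * nat) : bool :=
  [&& Gvtx ns x, Gvtx ns y &
    (* path edges v_{i,a} v_{i,a+1}, 1 <= a < n_i *)
    [&& x.1 == y.1, y.2 == x.2.+1 & x.2 < nn ns x.1]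
    || ((x.1 < y.1) &&
        (* x = v_{i,.}, y = v_{j,.}, i < j *)
        [|| (* (i) v_{i,a} v_{j,a}, 1 <= a < n_i, if n_i > 1 *)
            [&& 1 < nn ns x.1, x.2 == y.2 & 1 <= x.2 < nn ns x.1],
            (* (ii) v_{i,a+1} v_{j,a}, 1 <= a < n_i, if n_j > 1 *)
            [&& 1 < nn ns y.1, x.2 == y.2.+1 & 1 <= y.2 < nn ns x.1]
          | (* (iii) v_{i,n_i} v_{j,a}, n_i <= a <= n_j *)
            [&& x.2 == nn ns x.1 & nn ns x.1 <= y.2 <= nn ns y.1]])].

Definition Gadj (ns : seq nat) (x y : nat * nat) : bool :=
  Gedge ns x y || Gedge ns y x.

Definition Ppath (ns : seq nat) (i : nat) : seq (nat * nat) :=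
  [seq (i, a) | a <- iota 1 (nn ns i)].
Definition Ppaths (ns : seq nat) : seq (seq (nat * nat)) :=
  [seq Ppath ns i | i <- iota 1 (size ns)].

Definition path_arc {T : Type} (P : seq T) (x z : T) : Prop :=
  exists p1 p2, P = p1 ++ x :: z :: p2.

Definition D_arc {T : Type} (V : T -> Prop) (adj : T -> T -> Prop)
    (Ps : seq (seq T)) (x y : T) : Prop :=
  V x /\ V y /\ x <> y /\
  ((exists P, List.In P Ps /\ path_arc P x y) \/
   (exists z P, List.In P Ps /\ path_arc P x z /\ adj y z)).

Fixpoint dwalk {T : Type} (R : T -> T -> Prop) (x : T) (p : seq T) : Prop :=
  match p with
  | [::] => True
  | y :: q => R x y /\ dwalk R y q
  end.

Definition acyclic {T : Type} (R : T -> T -> Prop) : Prop :=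
  ~ exists (x : T) (p : seq T), p <> [::] /\ dwalk R x p /\ last x p = x.

(* Main.v *)
Require Import Defs.
From mathcomp Require Import all_boot zify.
Set Implicit Arguments. Unset Strict Implicit.

Lemma arc_in ns P x z : List.In P (Ppaths ns) -> path_arc P x z ->
  z.1 = x.1 /\ z.2 = x.2.+1 /\ z.2 <= nn ns x.1.
Proof.
rewrite /Ppaths => /List.in_map_iff [i [<- _]] [p1 [p2 E]].
have h1 := congr1 (fun s => nth (0,0) s (size p1)) E.
have h2 := congr1 (fun s => nth (0,0) s (size p1).+1) E.
have hs := congr1 size E.
rewrite /Ppath size_map size_iota size_cat /= in hs.
rewrite /= nth_cat ltnn subnn /Ppath in h1.
rewrite /= nth_cat ltnNge leqnSn /= subSnn /Ppath in h2.
rewrite (nth_map 0) ?size_iota in h1; last lia.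
rewrite (nth_map 0) ?size_iota in h2; last lia.
rewrite !nth_iota in h1 h2; try lia.
move: h1 h2 => /= h1 h2; rewrite -h1 -h2 /=; lia.
Qed.

Definition R ns := D_arc (fun x => Gvtx ns x) (fun x y => Gadj ns x y) (Ppaths ns).

Lemma arc_prop ns x y : R ns x y ->
  x.2 < nn ns x.1 /\ (y.2 = nn ns y.1 \/ x.2 < y.2 \/ (x.2 = y.2 /\ x.1 < y.1)).
Proof.
case: x => i a; case: y => j c.
move=> [Vx [Vy [ne [[P [HP Ha]]|[[l b] [P [HP [Ha Hadj]]]]]]]].
  have /= := arc_in HP Ha; lia.
have /= [E1 [E2 E3]] := arc_in HP Ha. subst l b.
have ne' : ~ (j = i /\ c = a) by move=> [? ?]; subst; apply: ne.
move: Vx Vy Hadj; rewrite /Gadj /Gedge /Gvtx /=.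
set ni := nn ns i; set nj := nn ns j.
move: E3 => /=; rewrite -/ni => E3.
move=> _ _ /orP [] /and3P [_ _] /orP [] /andP [].
- move=> /eqP ? /andP [/eqP ? _]; lia.
- move=> lt /orP [/and3P [_ /eqP ? _]|/orP [/and3P [_ /eqP ? _]| /andP [/eqP ? _]]]; lia.
- move=> /eqP ? /andP [/eqP ? _]; lia.
- move=> lt /orP [/and3P [_ /eqP ? _]|/orP [/and3P [_ /eqP ? _]| /andP [/eqP ? /andP [? ?]]]]; lia.
Qed.

Definition lexlt (x y : nat * nat) := x.2 < y.2 \/ (x.2 = y.2 /\ x.1 < y.1).

Lemma walk_lt ns x p : dwalk (R ns) x p -> p <> [::] ->
  (last x p).2 < nn ns (last x p).1 -> lexlt x (last x p).
Proof.
elim: p x => [//|y q IH] x /= [Hxy Hw] _ Hl.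
have [_ H] := arc_prop Hxy.
case: q IH Hw Hl => [|w q] IH Hw Hl /=.
  rewrite /lexlt; move: Hl => /=; lia.
have /= := IH y Hw ltac:(done) Hl.
move: Hw => /= [Hyw _]; have [Hy _] := arc_prop Hyw.
rewrite /lexlt; lia.
Qed.

Theorem lemma3 (n k : nat) (ns : seq nat) :
  size ns = k -> 1 <= k -> k <= n ->
  all (fun m => 0 < m) ns -> sorted leq ns -> sumn ns = n ->
  acyclic (D_arc (fun x => Gvtx ns x) (fun x y => Gadj ns x y) (Ppaths ns)).
Proof.
move=> _ _ _ _ _ _ [x [p [Hp [Hw Hl]]]].
have Hx : x.2 < nn ns x.1.
  by case: p Hp Hw {Hl} => [//|y q] _ [H _]; have [] := arc_prop H.
have := walk_lt Hw Hp; rewrite Hl => /(_ Hx); rewrite /lexlt; lia.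
Qed.
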